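(* For $\varepsilon\in(0,1)$ let $u^\varepsilon\in C^2([0,\infty))$ be the solution on all of $[0,\infty)$ of the Dirichlet problem $2(u^\varepsilon)^3=\varepsilon(u^\varepsilon)''$ in $(0,\infty)$, $u^\varepsilon(0)=1$. Then $u^\varepsilon\to u\equiv0$ locally uniformly in $(0,\infty)$ as $\varepsilon\to0^+$, and \[ |u^\varepsilon(x)-u(x)|=\frac{\sqrt{\varepsilon}}{x+\sqrt{\varepsilon}}\ge\frac{1}{2x}\sqrt{\varepsilon}\qquad\text{for all }x\ge1. \] In particular, for any $d>1$, the optimal rate of convergence of $u^\varepsilon$ to $u$ in the $L^\infty((1,d))$-norm is $O(\sqrt{\varepsilon})$, i.e., there is $c>0$ with $c\sqrt{\varepsilon}\le\|u^\varepsilon-u\|_{L^\infty((1,d))}\le\sqrt{\varepsilon}$ for all $\varepsilon\in(0,1)$. *)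

(* Defs.v *)
From Stdlib Require Import Reals.
From Coquelicot Require Import Coquelicot.
Open Scope R_scope.

Definition C2_nonneg (f : R -> R) : Prop :=
  (forall x, 0 < x -> ex_derive f x /\ ex_derive (Derive f) x) /\
  (forall x, 0 < x -> continuous (Derive_n f 2) x) /\
  filterlim f (at_right 0) (locally (f 0)) /\
  (exists l1 : R, filterlim (Derive f) (at_right 0) (locally l1)) /\
  (exists l2 : R, filterlim (Derive_n f 2) (at_right 0) (locally l2)).

Definition is_dirichlet_solution (eps : R) (f : R -> R) : Prop :=
  C2_nonneg f /\ f 0 = 1 /\
  (forall x, 0 < x -> 2 * (f x) ^ 3 = eps * Derive_n f 2 x).

(* Sup norm of f on the open interval (a,b); for continuous f this is the
   L^oo((a,b)) norm. *)
Definition Linf_norm (f : R -> R) (a b : R) : R :=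
  real (Lub_Rbar (fun y => exists x, a < x < b /\ y = Rabs (f x))).

Definition loc_unif_conv_pos (u : R -> R -> R) (v : R -> R) : Prop :=
  forall a b, 0 < a -> a <= b -> forall eta, 0 < eta ->
    exists delta, 0 < delta /\
      forall eps, 0 < eps < 1 -> eps < delta ->
        forall x, a <= x <= b -> Rabs (u eps x - v x) < eta.

(* Main.v *)
From Stdlib Require Import Reals Lra Classical.
From Coquelicot Require Import Coquelicot.
Open Scope R_scope.
Require Import Defs.

Lemma der_cont (g : R -> R) x l : is_derive g x l -> continuity_pt g x.
Proof.
  intros H. apply continuity_pt_filterlim. apply (ex_derive_continuous g x). exists l; exact H.
Qed.

Lemma mono_le (g g' : R -> R) lo hi : lo <= hi ->
  (forall x, lo <= x <= hi -> is_derive g x (g' x)) ->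
  (forall x, lo <= x <= hi -> 0 <= g' x) -> g lo <= g hi.
Proof.
  intros Hle Hd Hp.
  destruct (Req_dec lo hi) as [E|E]. { subst; lra. }
  destruct (MVT_gen g lo hi g') as [c [Hc Hm]].
  - intros x Hx. rewrite Rmin_left in Hx by lra. rewrite Rmax_right in Hx by lra.
    apply Hd; lra.
  - intros x Hx. rewrite Rmin_left in Hx by lra. rewrite Rmax_right in Hx by lra.
    apply (der_cont g x (g' x)). apply Hd; lra.
  - rewrite Rmin_left in Hc by lra. rewrite Rmax_right in Hc by lra.
    assert (0 <= g' c) by (apply Hp; lra).
    assert (0 <= g' c * (hi - lo)) by (apply Rmult_le_pos; lra). lra.
Qed.

Lemma gron_fwd (y a : R -> R) K lo hi : lo <= hi ->
  (forall x, lo <= x <= hi -> is_derive y x (a x * y x)) ->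
  (forall x, lo <= x <= hi -> Rabs (a x) <= K) ->
  y lo ^ 2 * exp (2*K*lo) <= y hi ^ 2 * exp (2*K*hi).
Proof.
  intros Hle Hd Hb.
  apply (mono_le (fun x => y x ^ 2 * exp (2*K*x))
     (fun x => 2 * (a x + K) * y x ^ 2 * exp (2*K*x))); auto.
  - intros x Hx. specialize (Hd x Hx).
    assert (E : is_derive (fun x0 => y x0 ^ 2 * exp (2*K*x0)) x
       (Derive y x * (2 * y x) * exp (2*K*x) + y x ^2 * (2*K*exp (2*K*x)))).
    { auto_derive. exists (a x * y x); exact Hd. change (Derive (fun x0 => y x0) x) with (Derive y x). ring. }
    rewrite (is_derive_unique y x _ Hd) in E.
    eapply is_derive_ext; [intro; reflexivity|]. 
    replace (2 * (a x + K) * y x ^ 2 * exp (2 * K * x)) with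
      (a x * y x * (2 * y x) * exp (2 * K * x) + y x ^ 2 * (2 * K * exp (2 * K * x))) by ring.
    exact E.
  - intros x Hx. specialize (Hb x Hx).
    assert (0 <= a x + K) by (apply Rabs_le_between in Hb; lra).
    pose proof (exp_pos (2*K*x)).
    apply Rmult_le_pos; [|lra]. apply Rmult_le_pos; [lra|]. apply pow2_ge_0.
Qed.

Lemma gron_bwd (y a : R -> R) K lo hi : lo <= hi ->
  (forall x, lo <= x <= hi -> is_derive y x (a x * y x)) ->
  (forall x, lo <= x <= hi -> Rabs (a x) <= K) ->
  y hi ^ 2 * exp (-(2*K*hi)) <= y lo ^ 2 * exp (-(2*K*lo)).
Proof.
  intros Hle Hd Hb.
  cut (- (y lo ^ 2 * exp (-(2*K*lo))) <= - (y hi ^ 2 * exp (-(2*K*hi)))). lra.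
  apply (mono_le (fun x => - (y x ^ 2 * exp (-(2*K*x))))
     (fun x => 2 * (K - a x) * y x ^ 2 * exp (-(2*K*x)))); auto.
  - intros x Hx. specialize (Hd x Hx).
    assert (E : is_derive (fun x0 => - (y x0 ^ 2 * exp (-(2*K*x0)))) x
       (- (Derive y x * (2 * y x) * exp (-(2*K*x)) + y x ^2 * (-(2*K)*exp (-(2*K*x)))))).
    { auto_derive. exists (a x * y x); exact Hd. change (Derive (fun x0 => y x0) x) with (Derive y x). ring. }
    rewrite (is_derive_unique y x _ Hd) in E.
    replace (2 * (K - a x) * y x ^ 2 * exp (-(2 * K * x))) with
      (- (a x * y x * (2 * y x) * exp (-(2 * K * x)) + y x ^ 2 * (-(2 * K) * exp (-(2 * K * x))))) by ring.
    exact E.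
  - intros x Hx. specialize (Hb x Hx).
    assert (0 <= K - a x) by (apply Rabs_le_between in Hb; lra).
    pose proof (exp_pos (-(2*K*x))).
    apply Rmult_le_pos; [|lra]. apply Rmult_le_pos; [lra|]. apply pow2_ge_0.
Qed.
Lemma ivt0 (y : R -> R) x1 x2 : (forall x, 0 < x -> continuity_pt y x) ->
  0 < x1 -> 0 < x2 -> y x1 < 0 -> 0 <= y x2 -> exists z, 0 < z /\ y z = 0.
Proof.
  intros Hc H1 H2 Hy1 Hy2.
  destruct (Req_dec (y x2) 0) as [E|E]. { exists x2; auto. }
  destruct (Rlt_or_le x1 x2) as [L|L].
  - destruct (Ranalysis5.IVT_interv y x1 x2) as [z [Hz Ez]]; auto.
    + intros a Ha; apply Hc; lra.
    + lra.
    + exists z; split; auto; lra.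
  - assert (x2 < x1) by (destruct (Req_dec x1 x2); [subst; lra| lra]).
    destruct (Ranalysis5.IVT_interv (fun t => - y t) x2 x1) as [z [Hz Ez]]; auto.
    + intros a Ha. apply continuity_pt_opp. apply Hc; lra.
    + lra.
    + lra.
    + exists z; split; [lra|]. lra.
Qed.

Lemma zero_prop (y a : R -> R) z x1 :
  (forall x, 0 < x -> is_derive y x (a x * y x)) ->
  (forall x, 0 < x -> continuity_pt a x) -> 0 < z -> y z = 0 -> 0 < x1 -> y x1 = 0.
Proof.
  intros Hd Hc Hz Ez H1.
  set (lo := Rmin x1 z). set (hi := Rmax x1 z).
  assert (Hlo : 0 < lo) by (unfold lo; apply Rmin_glb_lt; lra).
  assert (Hlh : lo <= hi) by (unfold lo, hi; apply Rle_trans with x1; [apply Rmin_l|apply Rmax_l]).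
  destruct (continuity_ab_maj (fun t => Rabs (a t)) lo hi Hlh) as [m [Hm _]].
  { intros c Hcc. apply (continuity_pt_comp a Rabs). apply Hc; lra. apply Rcontinuity_abs. }
  set (K := Rabs (a m)).
  assert (Hb : forall x, lo <= x <= hi -> Rabs (a x) <= K) by (intros; apply Hm; auto).
  assert (Hd' : forall x, lo <= x <= hi -> is_derive y x (a x * y x)) by (intros; apply Hd; lra).
  assert (y x1 ^ 2 = 0).
  { destruct (Rle_dec x1 z).
    - assert (E1 : lo = x1) by (unfold lo; apply Rmin_left; auto).
      assert (E2 : hi = z) by (unfold hi; apply Rmax_right; auto).
      pose proof (gron_fwd y a K lo hi Hlh Hd' Hb) as G. rewrite E1, E2, Ez in G.
      pose proof (exp_pos (2*K*x1)). pose proof (pow2_ge_0 (y x1)).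
      assert (y x1 ^2 * exp (2*K*x1) <= 0) by lra. nra.
    - assert (E1 : lo = z) by (unfold lo; apply Rmin_right; lra).
      assert (E2 : hi = x1) by (unfold hi; apply Rmax_left; lra).
      pose proof (gron_bwd y a K lo hi Hlh Hd' Hb) as G. rewrite E1, E2, Ez in G.
      pose proof (exp_pos (-(2*K*x1))). pose proof (pow2_ge_0 (y x1)).
      assert (y x1 ^2 * exp (-(2*K*x1)) <= 0) by lra. nra. }
  nra.
Qed.

Lemma sign_pres (y a : R -> R) x1 :
  (forall x, 0 < x -> is_derive y x (a x * y x)) ->
  (forall x, 0 < x -> continuity_pt a x) -> 0 < x1 -> y x1 < 0 ->
  forall x, 0 < x -> y x < 0.
Proof.
  intros Hd Hc H1 Hy x Hx.
  destruct (Rlt_or_le (y x) 0) as [L|L]; auto. exfalso.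
  destruct (ivt0 y x1 x) as [z [Hz Ez]]; auto.
  { intros t Ht. apply (der_cont y t (a t * y t)). auto. }
  pose proof (zero_prop y a z x1 Hd Hc Hz Ez H1). lra.
Qed.

Lemma blowup (g g' : R -> R) x0 k : 0 < k ->
  (forall x, x0 <= x -> is_derive g x (g' x)) ->
  (forall x, x0 <= x -> k * g x ^ 2 <= g' x) -> 0 < g x0 -> False.
Proof.
  intros Hk Hd Hg H0.
  assert (Hinc : forall x, x0 <= x -> g x0 <= g x).
  { intros x Hx. apply (mono_le g g'); auto.
    - intros; apply Hd; lra.
    - intros t Ht. pose proof (Hg t ltac:(lra)). pose proof (pow2_ge_0 (g t)). nra. }
  set (X := x0 + / (k * g x0) + 1).
  assert (HX : x0 <= X).
  { unfold X. assert (0 < / (k * g x0)) by (apply Rinv_0_lt_compat; nra). lra. }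
  assert (G : - (/ g x0 + k * x0) <= - (/ g X + k * X)).
  { apply (mono_le (fun x => - (/ g x + k * x)) (fun x => g' x / (g x ^ 2) - k)); auto.
    - intros x Hx. assert (0 < g x) by (pose proof (Hinc x ltac:(lra)); lra).
      pose proof (Hd x ltac:(lra)) as D.
      assert (E : is_derive (fun x1 => - (/ g x1 + k * x1)) x
                 (- (- Derive g x / (g x ^ 2)) - k)).
      { auto_derive. split. exists (g' x); exact D. split; [lra|auto].
        change (Derive (fun x0 => g x0) x) with (Derive g x). field. lra. }
      rewrite (is_derive_unique g x _ D) in E. replace (g' x / g x ^ 2 - k) with (- (- g' x / g x ^ 2) - k) by (field; lra). exact E.
    - intros x Hx. assert (0 < g x) by (pose proof (Hinc x ltac:(lra)); lra).
      pose proof (Hg x ltac:(lra)).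
      assert (0 < g x ^ 2) by nra.
      apply Rle_trans with (k * g x ^ 2 / g x ^ 2 - k).
      + right. field. lra.
      + unfold Rdiv. assert (0 < / g x ^2) by (apply Rinv_0_lt_compat; lra). nra. }
  assert (0 < g X) by (pose proof (Hinc X HX); lra).
  assert (0 < / g X) by (apply Rinv_0_lt_compat; lra).
  assert (E : k * X = k * x0 + / g x0 + k).
  { unfold X. field. lra. }
  lra.
Qed.

Lemma key_setup eps f : 0 < eps -> is_dirichlet_solution eps f ->
  let s := sqrt eps in
  0 < s /\ s * s = eps /\
  (forall x, 0 < x -> is_derive f x (Derive f x)) /\
  (forall x, 0 < x -> is_derive (Derive f) x (2 * f x ^ 3 / (s * s))) /\
  (forall eta, 0 < eta -> exists delta, 0 < delta /\ forall t, 0 < t < delta -> Rabs (f t - 1) < eta).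
Proof.
  intros He [[Hd [_ [Hl _]]] [H0 Heq]] s.
  assert (Hs : 0 < s) by (apply sqrt_lt_R0; auto).
  assert (Hss : s * s = eps) by (apply sqrt_sqrt; lra).
  split; [auto|split; [auto|split; [|split]]].
  - intros x Hx. apply Derive_correct. apply Hd; auto.
  - intros x Hx. destruct (Hd x Hx) as [_ D2].
    pose proof (Derive_correct _ _ D2) as D.
    pose proof (Heq x Hx) as E. change (Derive_n f 2 x) with (Derive (Derive f) x) in E.
    replace (2 * f x ^ 3 / (s * s)) with (Derive (Derive f) x); auto.
    rewrite Hss, E. field. lra.
  - intros eta Heta. rewrite H0 in Hl.
    apply filterlim_locally with (eps := mkposreal eta Heta) in Hl.
    destruct Hl as [d Hdd]. exists d; split; [apply cond_pos|].
    intros t [Ht1 Ht2]. apply Hdd; auto.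
    unfold ball; simpl; unfold AbsRing_ball, abs, minus, plus, opp; simpl.
    rewrite Ropp_0, Rplus_0_r, Rabs_pos_eq; lra.
Qed.


Lemma der_lin (y : R -> R) c x d : is_derive y x d -> is_derive (fun t => y t - c * t) x (d - c).
Proof.
  intros H. auto_derive. exists d; exact H.
  change (Derive (fun x0 => y x0) x) with (Derive y x). rewrite (is_derive_unique _ _ _ H). ring.
Qed.

Lemma der_opp (y : R -> R) x d : is_derive y x d -> is_derive (fun t => - y t) x (- d).
Proof.
  intros H. auto_derive. exists d; exact H.
  change (Derive (fun x0 => y x0) x) with (Derive y x). rewrite (is_derive_unique _ _ _ H). ring.
Qed.

Lemma key_core (f : R -> R) s : 0 < s ->
  (forall x, 0 < x -> is_derive f x (Derive f x)) ->
  (forall x, 0 < x -> is_derive (Derive f) x (2 * f x ^ 3 / (s * s))) ->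
  (forall eta, 0 < eta -> exists delta, 0 < delta /\ forall t, 0 < t < delta -> Rabs (f t - 1) < eta) ->
  forall x, 0 < x -> f x = s / (x + s).
Proof.
  intros Hs Hd Hdd Hlim.
  assert (Hcf : forall x, 0 < x -> continuity_pt f x) by (intros x Hx; exact (der_cont _ _ _ (Hd x Hx))).
  assert (Hpos : exists t, 0 < t /\ 0 < f t).
  { destruct (Hlim (1/2)) as [d [Hd0 Hdl]]; [lra|]. exists (d/2). split; [lra|].
    pose proof (Hdl (d/2) ltac:(lra)) as A. apply Rabs_lt_between' in A. lra. }
  set (a := fun x => 2 * f x / s).
  assert (Hda : forall x, 0 < x -> is_derive a x (2 * Derive f x / s)).
  { intros x Hx. unfold a. auto_derive. exists (Derive f x); auto.
    change (Derive (fun x0 => f x0) x) with (Derive f x). field. lra. }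
  assert (Hca : forall x, 0 < x -> continuity_pt a x) by (intros x Hx; exact (der_cont _ _ _ (Hda x Hx))).
  assert (Hcma : forall x, 0 < x -> continuity_pt (fun t => - a t) x).
  { intros x Hx. apply continuity_pt_opp. auto. }
  set (P := fun x => Derive f x + f x ^ 2 / s).
  set (M := fun x => Derive f x - f x ^ 2 / s).
  assert (HP : forall x, 0 < x -> is_derive P x (a x * P x)).
  { intros x Hx. unfold P, a.
    pose proof (Hd x Hx) as D1. pose proof (Hdd x Hx) as D2.
    auto_derive. 
    - split; [exists (2 * f x ^ 3 / (s * s)); exact D2|split; [exists (Derive f x); exact D1|auto]].
    - change (Derive (fun x0 => Derive f x0) x) with (Derive (Derive f) x).
      change (Derive (fun x0 => f x0) x) with (Derive f x).
      rewrite (is_derive_unique _ _ _ D2). field. lra. }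
  assert (HM : forall x, 0 < x -> is_derive M x ((fun t => - a t) x * M x)).
  { intros x Hx. unfold M, a.
    pose proof (Hd x Hx) as D1. pose proof (Hdd x Hx) as D2.
    auto_derive. 
    - split; [exists (2 * f x ^ 3 / (s * s)); exact D2|split; [exists (Derive f x); exact D1|auto]].
    - change (Derive (fun x0 => Derive f x0) x) with (Derive (Derive f) x).
      change (Derive (fun x0 => f x0) x) with (Derive f x).
      rewrite (is_derive_unique _ _ _ D2). field. lra. }
  assert (HmP : forall x, 0 < x -> is_derive (fun t => - P t) x (a x * (fun t => - P t) x)).
  { intros x Hx. pose proof (is_derive_opp _ _ _ (HP x Hx)) as E. simpl in E.
    replace (a x * - P x) with (opp (a x * P x)) by (unfold opp; simpl; ring). exact E. }
  assert (HmM : forall x, 0 < x -> is_derive (fun t => - M t) x ((fun t => - a t) x * (fun t => - M t) x)).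
  { intros x Hx. pose proof (is_derive_opp _ _ _ (HM x Hx)) as E. simpl in E.
    replace (- a x * - M x) with (opp (- a x * M x)) by (unfold opp; simpl; ring). exact E. }
  assert (PM1 : forall x, P x - M x = 2 * f x ^ 2 / s) by (intros; unfold P, M; field; lra).
  assert (PM2 : forall x, P x + M x = 2 * Derive f x) by (intros; unfold P, M; field; lra).
  assert (NoNeg : ~ exists x1, 0 < x1 /\ P x1 < 0).
  { intros [x1 [H1 HP1]].
    pose proof (sign_pres P a x1 HP Hca H1 HP1) as Pn.
    assert (Hneg : exists x2, x1 <= x2 /\ f x2 < 0).
    { destruct (classic (exists x2, x1 <= x2 /\ f x2 < 0)) as [h|h]; auto. exfalso.
      assert (Hf0 : forall x, x1 <= x -> 0 <= f x).
      { intros x Hx; destruct (Rlt_or_le (f x) 0); auto; exfalso; apply h; exists x; auto. }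
      assert (Pdec : forall x, x1 <= x -> P x <= P x1).
      { intros x Hx. cut (- P x1 <= - P x). lra.
        apply (mono_le (fun t => - P t) (fun t => - (a t * P t))); auto.
        - intros t Ht. apply der_opp. apply HP; lra.
        - intros t Ht. assert (0 <= a t).
          { unfold a, Rdiv. apply Rmult_le_pos; [pose proof (Hf0 t ltac:(lra)); lra| left; apply Rinv_0_lt_compat; lra]. }
          pose proof (Pn t ltac:(lra)). nra. }
      set (X := x1 + f x1 / (- P x1) + 1).
      assert (Q0 : 0 <= f x1 / (- P x1)).
      { unfold Rdiv. apply Rmult_le_pos; [apply Hf0; lra| left; apply Rinv_0_lt_compat; lra]. }
      assert (HX : x1 <= X) by (unfold X; lra).
      assert (G : - f x1 - (- P x1) * x1 <= - f X - (- P x1) * X).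
      { apply (mono_le (fun t => - f t - (- P x1) * t) (fun t => - Derive f t - (- P x1))); auto.
        - intros t Ht. apply der_lin. apply der_opp. apply Hd; lra.
        - intros t Ht. pose proof (Pdec t ltac:(lra)).
          assert (0 <= f t ^ 2 / s) by (unfold Rdiv; apply Rmult_le_pos; [apply pow2_ge_0|left; apply Rinv_0_lt_compat; lra]).
          unfold P in *. lra. }
      assert (E : P x1 * (f x1 / (- P x1)) = - f x1) by (field; lra).
      pose proof (Hf0 X HX).
      assert (E2 : - P x1 * X = - P x1 * x1 + f x1 - P x1) by (unfold X; rewrite !Rmult_plus_distr_l; lra).
      lra. }
    destruct Hneg as [x2 [H2 Hf2]].
    apply (blowup (fun t => - f t) (fun t => - Derive f t) x2 (/ s)).
    - apply Rinv_0_lt_compat; lra.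
    - intros x Hx. apply der_opp. apply Hd; lra.
    - intros x Hx. pose proof (Pn x ltac:(lra)) as Q. unfold P in Q.
      replace (/ s * (- f x) ^ 2) with (f x ^ 2 / s) by (field; lra). lra.
    - lra. }
  assert (NoPos : ~ exists x1, 0 < x1 /\ 0 < P x1).
  { intros [x1 [H1 HP1]].
    assert (Pp : forall x, 0 < x -> 0 < P x).
    { intros x Hx. pose proof (sign_pres (fun t => - P t) a x1 HmP Hca H1 ltac:(lra) x Hx). simpl in *. lra. }
    destruct (classic (exists x3, 0 < x3 /\ M x3 < 0)) as [[x3 [H3 HM3]] | hM].
    - pose proof (sign_pres M (fun t => - a t) x3 HM Hcma H3 HM3) as Mn.
      assert (f2 : forall x, f x ^ 2 = s * (P x - M x) / 2).
      { intros x. rewrite PM1. field. lra. }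
      assert (fpos : forall x, 0 < x -> 0 < f x).
      { intros x Hx. assert (0 < f x ^ 2).
        { rewrite f2. pose proof (Pp x Hx). pose proof (Mn x Hx).
          unfold Rdiv. apply Rmult_lt_0_compat; [nra|lra]. }
        destruct (Rlt_or_le 0 (f x)) as [L|L]; auto. exfalso.
        destruct Hpos as [t [Ht Hft]].
        assert (f x < 0) by (destruct (Req_dec (f x) 0) as [E|E]; [rewrite E in *; simpl in *; lra|lra]).
        destruct (ivt0 f x t Hcf Hx Ht ltac:(lra) ltac:(lra)) as [z [Hz Ez]].
        assert (0 < f z ^ 2).
        { rewrite f2. pose proof (Pp z Hz). pose proof (Mn z Hz).
          unfold Rdiv. apply Rmult_lt_0_compat; [nra|lra]. }
        rewrite Ez in *. simpl in *. lra. }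
      assert (apos : forall x, 0 < x -> 0 < a x).
      { intros x Hx. unfold a, Rdiv. apply Rmult_lt_0_compat; [pose proof (fpos x Hx); lra|apply Rinv_0_lt_compat; lra]. }
      assert (Pinc : forall x, x1 <= x -> P x1 <= P x).
      { intros x Hx. apply (mono_le P (fun t => a t * P t)); auto.
        - intros t Ht. apply HP; lra.
        - intros t Ht. pose proof (apos t ltac:(lra)). pose proof (Pp t ltac:(lra)). nra. }
      assert (Minc : forall x, x1 <= x -> M x1 <= M x).
      { intros x Hx. apply (mono_le M (fun t => - a t * M t)); auto.
        - intros t Ht. apply HM; lra.
        - intros t Ht. pose proof (apos t ltac:(lra)). pose proof (Mn t ltac:(lra)). nra. }
      set (m := sqrt (s * P x1 / 2)).
      assert (Hm0 : 0 < m) by (unfold m; apply sqrt_lt_R0; unfold Rdiv; apply Rmult_lt_0_compat; [nra|lra]).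
      assert (Hmm : m * m = s * P x1 / 2) by (unfold m; apply sqrt_sqrt; unfold Rdiv; apply Rmult_le_pos; [nra|lra]).
      assert (fge : forall x, x1 <= x -> m <= f x).
      { intros x Hx. pose proof (fpos x ltac:(lra)). pose proof (f2 x). pose proof (Pinc x Hx).
        pose proof (Mn x ltac:(lra)).
        assert (s * P x1 / 2 <= f x ^ 2).
        { rewrite f2. unfold Rdiv. apply Rmult_le_compat_r; [lra|]. nra. }
        destruct (Rlt_or_le (f x) m); auto. nra. }
      set (kap := 2 * m * P x1 / s).
      assert (Hk : 0 < kap).
      { unfold kap, Rdiv. apply Rmult_lt_0_compat; [nra|apply Rinv_0_lt_compat; lra]. }
      assert (Plin : forall x, x1 <= x -> P x1 - kap * x1 <= P x - kap * x).
      { intros x Hx. apply (mono_le (fun t => P t - kap * t) (fun t => a t * P t - kap)); auto.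
        - intros t Ht. apply der_lin. apply HP; lra.
        - intros t Ht. pose proof (fge t ltac:(lra)). pose proof (Pinc t ltac:(lra)).
          assert (a t * P t >= kap).
          { unfold a, kap. unfold Rdiv.
            assert (0 < / s) by (apply Rinv_0_lt_compat; lra).
            assert (2 * m * P x1 <= 2 * f t * P t) by nra. nra. }
          lra. }
      set (x2 := x1 + 3 * (- M x1) / kap).
      assert (Hx2 : x1 <= x2).
      { unfold x2. assert (0 <= 3 * (- M x1) / kap).
        { unfold Rdiv. apply Rmult_le_pos; [pose proof (Mn x1 H1); lra| left; apply Rinv_0_lt_compat; lra]. }
        lra. }
      apply (blowup f (Derive f) x2 (/ (2 * s))).
      + apply Rinv_0_lt_compat; lra.
      + intros x Hx. apply Hd; lra.
      + intros x Hx. pose proof (Plin x ltac:(lra)).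
        pose proof (Minc x ltac:(lra)). pose proof (Mn x ltac:(lra)).
        assert (kap * (x - x1) >= 3 * (- M x1)).
        { assert (kap * (x2 - x1) = 3 * (- M x1)) by (unfold x2; field; lra). nra. }
        rewrite f2. pose proof (PM2 x).
        replace (/ (2 * s) * (s * (P x - M x) / 2)) with ((P x - M x) / 4) by (field; lra).
        lra.
      + apply fpos; lra.
    - destruct Hpos as [t [Ht Hft]].
      apply (blowup f (Derive f) t (/ s)).
      + apply Rinv_0_lt_compat; lra.
      + intros x Hx. apply Hd; lra.
      + intros x Hx. destruct (Rlt_or_le (M x) 0) as [L|L].
        { exfalso. apply hM. exists x. split; [lra|auto]. }
        unfold M in L. replace (/ s * f x ^ 2) with (f x ^ 2 / s) by (field; lra). lra.
      + auto. }
  assert (HP0 : forall x, 0 < x -> P x = 0).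
  { intros x Hx. destruct (Rtotal_order (P x) 0) as [L|[L|L]]; auto.
    - exfalso; apply NoNeg; exists x; auto.
    - exfalso; apply NoPos; exists x; auto. }
  assert (Hfd : forall x, 0 < x -> Derive f x = - (f x ^ 2 / s)).
  { intros x Hx. pose proof (HP0 x Hx). unfold P in *. lra. }
  assert (Hdec : forall u v, 0 < u -> u <= v -> f v <= f u).
  { intros u v Hu Huv. cut (- f u <= - f v). lra.
    apply (mono_le (fun t => - f t) (fun t => - Derive f t)); auto.
    - intros t Ht. apply der_opp. apply Hd; lra.
    - intros t Ht. rewrite Hfd by lra.
      assert (0 <= f t ^ 2 / s) by (unfold Rdiv; apply Rmult_le_pos; [apply pow2_ge_0|left; apply Rinv_0_lt_compat; lra]).
      lra. }
  assert (Hle1 : forall t, 0 < t -> f t <= 1).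
  { intros t Ht. destruct (Rlt_or_le 1 (f t)) as [L|L]; auto. exfalso.
    destruct (Hlim (f t - 1)) as [d [Hd0 Hdl]]; [lra|].
    set (t' := Rmin d t / 2).
    assert (0 < Rmin d t) by (apply Rmin_glb_lt; lra).
    assert (Rmin d t <= d) by apply Rmin_l. assert (Rmin d t <= t) by apply Rmin_r.
    pose proof (Hdl t' ltac:(unfold t'; lra)) as A. apply Rabs_lt_between' in A.
    pose proof (Hdec t' t ltac:(unfold t'; lra) ltac:(unfold t'; lra)). lra. }
  intros x1 H1.
  set (B := Rmax 1 (Rabs (f x1))).
  set (K := B / s).
  set (q := fun t => f t * (t + s) - s).
  assert (Hq : forall t, 0 < t -> is_derive q t ((fun u => - (f u / s)) t * q t)).
  { intros t Ht. unfold q. pose proof (Hd t Ht) as D. auto_derive.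
    - exists (Derive f t); exact D.
    - change (Derive (fun x0 => f x0) t) with (Derive f t). rewrite Hfd by lra. field. lra. }
  assert (HB1 : 1 <= B) by apply Rmax_l.
  assert (HB2 : Rabs (f x1) <= B) by apply Rmax_r.
  assert (HK : 0 <= K) by (unfold K, Rdiv; apply Rmult_le_pos; [lra|left; apply Rinv_0_lt_compat; lra]).
  assert (Gr : forall t, 0 < t <= x1 -> q x1 ^ 2 * exp (-(2*K*x1)) <= q t ^ 2).
  { intros t Ht.
    pose proof (gron_bwd q (fun u => - (f u / s)) K t x1 ltac:(lra)) as G.
    assert (E1 : exp (-(2*K*t)) <= 1).
    { destruct (Rle_lt_or_eq_dec _ _ (Rmult_le_pos (2*K) t ltac:(lra) ltac:(lra))) as [L|L].
      - rewrite <- exp_0. left. apply exp_increasing. lra.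
      - rewrite <- L. rewrite Ropp_0, exp_0. lra. }
    assert (q x1 ^ 2 * exp (- (2 * K * x1)) <= q t ^ 2 * exp (- (2 * K * t))).
    { apply G.
      - intros u Hu. apply Hq. lra.
      - intros u Hu. pose proof (Hle1 u ltac:(lra)). pose proof (Hdec u x1 ltac:(lra) ltac:(lra)).
        apply Rabs_le_between in HB2.
        apply Rabs_le. unfold K, Rdiv.
        assert (0 < / s) by (apply Rinv_0_lt_compat; lra).
        split; nra. }
    pose proof (pow2_ge_0 (q t)). nra. }
  assert (Sm : forall e, 0 < e -> exists t, 0 < t <= x1 /\ q t ^ 2 < e).
  { intros e He. set (r := Rmin 1 e).
    assert (Hr0 : 0 < r) by (apply Rmin_glb_lt; lra).
    assert (Hr1 : r <= 1) by apply Rmin_l. assert (Hr2 : r <= e) by apply Rmin_r.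
    destruct (Hlim (r / (2 * (1 + s)))) as [d [Hd0 Hdl]].
    { unfold Rdiv. apply Rmult_lt_0_compat; [lra|apply Rinv_0_lt_compat; lra]. }
    set (t := Rmin (Rmin (d/2) x1) (r/4)).
    assert (0 < t) by (unfold t; repeat apply Rmin_glb_lt; lra).
    assert (t <= d/2) by (unfold t; eapply Rle_trans; [apply Rmin_l|apply Rmin_l]).
    assert (t <= x1) by (unfold t; eapply Rle_trans; [apply Rmin_l|apply Rmin_r]).
    assert (t <= r/4) by (unfold t; apply Rmin_r).
    exists t. split; [lra|].
    pose proof (Hdl t ltac:(lra)) as A. apply Rabs_lt_between' in A.
    assert (Eh : r / (2 * (1 + s)) * (1 + s) = r / 2) by (field; lra).
    assert (Hqt : - r < q t < r).
    { unfold q. set (h := r / (2 * (1 + s))) in *.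
      assert (0 < h) by (unfold h, Rdiv; apply Rmult_lt_0_compat; [lra|apply Rinv_0_lt_compat; lra]).
      assert (h * (t + s) <= h * (1 + s)) by (apply Rmult_le_compat_l; lra).
      split; nra. }
    nra. }
  assert (Z : q x1 ^ 2 * exp (-(2*K*x1)) <= 0).
  { destruct (Rlt_or_le 0 (q x1 ^ 2 * exp (-(2*K*x1)))) as [L|L]; auto.
    destruct (Sm _ L) as [t [Ht Hqt]]. pose proof (Gr t Ht). lra. }
  pose proof (exp_pos (-(2*K*x1))) as Hex.
  assert (Q2 : q x1 ^ 2 = 0).
  { apply Rle_antisym; [|apply pow2_ge_0].
    destruct (Rlt_or_le 0 (q x1 ^ 2)) as [L|L]; auto.
    pose proof (Rmult_lt_0_compat _ _ L Hex). lra. }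
  assert (Hq0 : q x1 = 0) by (simpl in Q2; rewrite Rmult_1_r in Q2; destruct (Rmult_integral _ _ Q2); auto).
  unfold q in Hq0.
  assert (0 < x1 + s) by lra.
  apply (Rmult_eq_reg_r (x1 + s)); [|lra]. field_simplify; lra.
Qed.

Lemma sol_formula (u : R -> R -> R)
  (Hu : forall eps, 0 < eps < 1 -> is_dirichlet_solution eps (u eps)) eps :
  0 < eps < 1 -> forall x, 0 < x -> u eps x = sqrt eps / (x + sqrt eps).
Proof.
  intros He. destruct (key_setup eps (u eps) ltac:(lra) (Hu eps He)) as [Hs [_ [Hd [Hdd Hl]]]].
  apply key_core; auto.
Qed.

Theorem lemma4p6 (u : R -> R -> R)
  (Hu : forall eps, 0 < eps < 1 -> is_dirichlet_solution eps (u eps)) :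
  let u0 := fun _ : R => 0 in
  loc_unif_conv_pos u u0 /\
  (forall eps, 0 < eps < 1 -> forall x, 1 <= x ->
     Rabs (u eps x - u0 x) = sqrt eps / (x + sqrt eps) /\
     sqrt eps / (x + sqrt eps) >= sqrt eps / (2 * x)) /\
  (forall d, 1 < d -> exists c, 0 < c /\
     forall eps, 0 < eps < 1 ->
       c * sqrt eps <= Linf_norm (fun x => u eps x - u0 x) 1 d <= sqrt eps).
Proof.
  intros u0. split; [|split].
  - intros a b Ha Hab eta Heta. exists ((eta * a) ^ 2). split; [assert (0 < eta * a) by (apply Rmult_lt_0_compat; lra); simpl; nra|].
    intros eps He Hlt x Hx. unfold u0. rewrite Rminus_0_r.
    rewrite (sol_formula u Hu eps He x ltac:(lra)).
    assert (Hs : 0 < sqrt eps) by (apply sqrt_lt_R0; lra).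
    assert (Hs2 : sqrt eps < eta * a).
    { rewrite <- (sqrt_pow2 (eta * a)) by nra. apply sqrt_lt_1; nra. }
    rewrite Rabs_pos_eq.
    + apply Rlt_div_l; [lra|]. nra.
    + unfold Rdiv; apply Rmult_le_pos; [lra|left; apply Rinv_0_lt_compat; lra].
  - intros eps He x Hx. unfold u0. rewrite Rminus_0_r.
    rewrite (sol_formula u Hu eps He x ltac:(lra)).
    assert (Hs : 0 < sqrt eps) by (apply sqrt_lt_R0; lra).
    assert (Hs1 : sqrt eps < 1) by (rewrite <- sqrt_1; apply sqrt_lt_1; lra).
    split.
    + rewrite Rabs_pos_eq; auto.
      unfold Rdiv; apply Rmult_le_pos; [lra|left; apply Rinv_0_lt_compat; lra].
    + unfold Rdiv. apply Rle_ge. apply Rmult_le_compat_l; [lra|].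
      apply Rinv_le_contravar; lra.
  - intros d Hd. exists (/ (d + 1)). split; [apply Rinv_0_lt_compat; lra|].
    intros eps He.
    assert (Hs : 0 < sqrt eps) by (apply sqrt_lt_R0; lra).
    assert (Hs1 : sqrt eps < 1) by (rewrite <- sqrt_1; apply sqrt_lt_1; lra).
    set (s := sqrt eps) in *.
    unfold Linf_norm.
    set (E := fun y => exists x, 1 < x < d /\ y = Rabs (u eps x - u0 x)).
    destruct (Lub_Rbar_correct E) as [Hub Hlub].
    assert (U : Rbar_le (Lub_Rbar E) (Finite s)).
    { apply Hlub. intros y [x [Hx Ey]]. simpl. rewrite Ey. unfold u0. rewrite Rminus_0_r.
      rewrite (sol_formula u Hu eps He x ltac:(lra)). fold s.
      rewrite Rabs_pos_eq.
      + apply Rle_div_l; [lra|]. nra.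
      + unfold Rdiv; apply Rmult_le_pos; [lra|left; apply Rinv_0_lt_compat; lra]. }
    set (x0 := (1 + d) / 2).
    assert (Lo : Rbar_le (Finite (s / (x0 + s))) (Lub_Rbar E)).
    { apply Hub. exists x0. split; [unfold x0; lra|]. unfold u0. rewrite Rminus_0_r.
      rewrite (sol_formula u Hu eps He x0 ltac:(unfold x0; lra)). fold s.
      rewrite Rabs_pos_eq; auto.
      unfold Rdiv; apply Rmult_le_pos; [lra|left; apply Rinv_0_lt_compat; unfold x0; lra]. }
    assert (Hc : / (d + 1) * s <= s / (x0 + s)).
    { unfold Rdiv. rewrite Rmult_comm. apply Rmult_le_compat_l; [lra|].
      apply Rinv_le_contravar; unfold x0; lra. }
    destruct (Lub_Rbar E) as [l| |]; simpl in *; try contradiction.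
    split; lra.
Qed.
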